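(* Let $G$ be a connected graph in $\mathcal{C}$ and $C$ an induced $C_5$ in $G$. If $X\neq\emptyset$, then $|R|\le 2$ or $X$ is a clique cutset of $G$.
   Context: $\mathcal{C}=\mathrm{Free}(\text{claw}, 4K_1, \text{5-wheel}, C_5\text{-twin}, P_5\text{-twin}, K_5-e)$, where $\mathrm{Free}(L)$ is the class of graphs with no induced subgraph isomorphic to a member of $L$; the claw is $K_{1,3}$; $4K_1$ is the edgeless graph on 4 vertices; the 5-wheel is $C_5$ plus a vertex adjacent to all five cycle vertices; the $C_5$-twin is $C_5$ plus a new vertex adjacent to one cycle vertex $v$ and both cycle-neighbours of $v$; the $P_5$-twin is a path $p_1p_2p_3p_4p_5$ plus a new vertex adjacent to exactly $p_2,p_3,p_4$; $K_5-e$ is $K_5$ minus one edge. Given an induced cycle $C$ of length 5 with vertices $0,\dots,4$ in cyclic order (indices taken mod 5): $R$ is the set of vertices outside $C$ with no neighbour in $C$; $X_j$ is the set of vertices outside $C$ whose neighbourhood in $C$ is exactly $\{j,j+1\}$; $Y_j$ is the set of vertices outside $C$ whose neighbourhood in $C$ is exactly $\{j,j+1,j+2,j+3\}$; $X=\bigcup_j X_j$, $Y=\bigcup_j Y_j$. A clique cutset of $G$ is a set $S$ of vertices inducing a clique such that $G-S$ is disconnected. *)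

(* Defs.v *)
From mathcomp Require Import all_boot.
Set Implicit Arguments. Unset Strict Implicit. Unset Printing Implicit Defensive.

Definition mkgraph {n : nat} (f : nat -> nat -> bool) : rel 'I_n :=
  fun i j => (i != j) && (f i j || f j i).

Definition induced_sub (T : finType) (e : rel T) (n : nat) (h : rel 'I_n) : Prop :=
  exists f : 'I_n -> T, injective f /\ forall i j, e (f i) (f j) = h i j.

Definition cyc5 (i j : nat) : bool := (j == (i + 1) %% 5).

Definition claw : rel 'I_4 := mkgraph (fun i j => (i == 0) && (j != 0)).
Definition fourK1 : rel 'I_4 := mkgraph (fun _ _ => false).
Definition wheel5 : rel 'I_6 :=
  mkgraph (fun i j => ((i < 5) && (j < 5) && cyc5 i j) || ((i < 5) && (j == 5))).
(* C_5-twin: C_5 on 0..4, vertex 5 adjacent to 0 and its cycle neighbours 1,4 *)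
Definition C5twin : rel 'I_6 :=
  mkgraph (fun i j => ((i < 5) && (j < 5) && cyc5 i j)
                       || ((j == 5) && ((i == 0) || (i == 1) || (i == 4)))).
Definition P5twin : rel 'I_6 :=
  mkgraph (fun i j => ((j < 5) && (j == i + 1))
                       || ((j == 5) && ((i == 1) || (i == 2) || (i == 3)))).
Definition K5e : rel 'I_5 := mkgraph (fun i j => ~~ ((i <= 1) && (j <= 1))).

Definition in_classC (T : finType) (e : rel T) : Prop :=
  ~ induced_sub e claw /\ ~ induced_sub e fourK1 /\ ~ induced_sub e wheel5 /\
  ~ induced_sub e C5twin /\ ~ induced_sub e P5twin /\ ~ induced_sub e K5e.

Definition simple_graph (T : finType) (e : rel T) : Prop :=
  symmetric e /\ irreflexive e.

Definition connected_graph (T : finType) (e : rel T) : Prop :=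
  forall x y : T, connect e x y.

Definition induced_C5 (T : finType) (e : rel T) (c : 'I_5 -> T) : Prop :=
  injective c /\ forall i j : 'I_5, e (c i) (c j) = mkgraph cyc5 i j.

Definition s5 (j : 'I_5) : 'I_5 := inord ((j + 1) %% 5).

Definition nbC (T : finType) (e : rel T) (c : 'I_5 -> T) (v : T) : {set 'I_5} :=
  [set i | e v (c i)].

Definition outC (T : finType) (c : 'I_5 -> T) (v : T) : bool := v \notin codom c.

Definition Rset (T : finType) (e : rel T) (c : 'I_5 -> T) : {set T} :=
  [set v | outC c v & nbC e c v == set0].

Definition Xj (T : finType) (e : rel T) (c : 'I_5 -> T) (j : 'I_5) : {set T} :=
  [set v | outC c v & nbC e c v == [set j; s5 j]].

Definition Xset (T : finType) (e : rel T) (c : 'I_5 -> T) : {set T} :=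
  \bigcup_(j : 'I_5) Xj e c j.

Definition clique (T : finType) (e : rel T) (S : {set T}) : Prop :=
  forall x y, x \in S -> y \in S -> x != y -> e x y.

(* G - S is disconnected: two vertices outside S not joined by a path avoiding S *)
Definition clique_cutset (T : finType) (e : rel T) (S : {set T}) : Prop :=
  clique e S /\
  exists x y, [/\ x \notin S, y \notin S &
    ~~ connect [rel u v | e u v && (u \notin S) && (v \notin S)] x y].

(* Main.v *)
Require Import Defs.
From mathcomp Require Import all_boot.
Set Implicit Arguments. Unset Strict Implicit.
Notation o0 := (@Ordinal 5 0 isT).
Notation o1 := (@Ordinal 5 1 isT).
Notation o2 := (@Ordinal 5 2 isT).
Notation o3 := (@Ordinal 5 3 isT).
Notation o4 := (@Ordinal 5 4 isT).
Lemma ord5_ind (P : 'I_5 -> Prop) : P o0 -> P o1 -> P o2 -> P o3 -> P o4 -> forall k, P k.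
Proof.
move=> H0 H1 H2 H3 H4 [[|[|[|[|[|m]]]]] Hk] //; by rewrite (bool_irrelevance Hk isT).
Qed.
Lemma ord4_ind (P : 'I_4 -> Prop) :
  P (@Ordinal 4 0 isT) -> P (@Ordinal 4 1 isT) -> P (@Ordinal 4 2 isT) -> P (@Ordinal 4 3 isT) -> forall k, P k.
Proof.
move=> H0 H1 H2 H3 [[|[|[|[|m]]]] Hk] //; by rewrite (bool_irrelevance Hk isT).
Qed.
Definition s5c (j : 'I_5) : 'I_5 := Ordinal (ltn_pmod (j + 1) (isT : 0 < 5)).
Lemma s5E j : s5 j = s5c j.
Proof. by apply: val_inj; rewrite /= inordK // ltn_pmod. Qed.

Lemma FA j : exists a b : 'I_5, [&& a != j, a != s5 j, b != j, b != s5 j, a != b & ~~ mkgraph cyc5 a b].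
Proof.
rewrite s5E; elim/ord5_ind: j.
- by exists o2, o4; vm_compute.
- by exists o3, o0; vm_compute.
- by exists o4, o1; vm_compute.
- by exists o0, o2; vm_compute.
- by exists o1, o3; vm_compute.
Qed.

Lemma FC i : exists a b : 'I_5, [&& a != b, mkgraph cyc5 i a, mkgraph cyc5 i b & ~~ mkgraph cyc5 a b].
Proof.
elim/ord5_ind: i.
- by exists o1, o4; vm_compute.
- by exists o2, o0; vm_compute.
- by exists o3, o1; vm_compute.
- by exists o4, o2; vm_compute.
- by exists o0, o3; vm_compute.
Qed.

Lemma comb (p : 'I_5 -> bool) :
  (forall a b : 'I_5, ~~ mkgraph cyc5 a b -> a != b -> ~~ (p a && p b)) -> (exists k, p k) ->
  (exists j, forall k, p k = (k == j) || (k == s5 j)) \/ (exists i, forall k, p k = (k == i)).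
Proof.
move=> H [k Hk].
have N02 := H o0 o2 isT isT. have N03 := H o0 o3 isT isT.
have N13 := H o1 o3 isT isT. have N14 := H o1 o4 isT isT.
have N24 := H o2 o4 isT isT.
case E0: (p o0); case E1: (p o1); case E2: (p o2); case E3: (p o3); case E4: (p o4);
  move: N02 N03 N13 N14 N24; rewrite ?E0 ?E1 ?E2 ?E3 ?E4 /= => // _ _ _ _ _;
  first [ (by exfalso; move: Hk; elim/ord5_ind: k; rewrite ?E0 ?E1 ?E2 ?E3 ?E4)
        | (by right; exists o0; elim/ord5_ind; rewrite ?E0 ?E1 ?E2 ?E3 ?E4; vm_compute)
        | (by right; exists o1; elim/ord5_ind; rewrite ?E0 ?E1 ?E2 ?E3 ?E4; vm_compute)
        | (by right; exists o2; elim/ord5_ind; rewrite ?E0 ?E1 ?E2 ?E3 ?E4; vm_compute)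
        | (by right; exists o3; elim/ord5_ind; rewrite ?E0 ?E1 ?E2 ?E3 ?E4; vm_compute)
        | (by right; exists o4; elim/ord5_ind; rewrite ?E0 ?E1 ?E2 ?E3 ?E4; vm_compute)
        | (by left; exists o0; rewrite s5E; elim/ord5_ind; rewrite ?E0 ?E1 ?E2 ?E3 ?E4; vm_compute)
        | (by left; exists o1; rewrite s5E; elim/ord5_ind; rewrite ?E0 ?E1 ?E2 ?E3 ?E4; vm_compute)
        | (by left; exists o2; rewrite s5E; elim/ord5_ind; rewrite ?E0 ?E1 ?E2 ?E3 ?E4; vm_compute)
        | (by left; exists o3; rewrite s5E; elim/ord5_ind; rewrite ?E0 ?E1 ?E2 ?E3 ?E4; vm_compute)
        | (by left; exists o4; rewrite s5E; elim/ord5_ind; rewrite ?E0 ?E1 ?E2 ?E3 ?E4; vm_compute) ].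
Qed.

Lemma ind_list (T : finType) (e : rel T) n (h : rel 'I_n) (x0 : T) (s : seq T) :
  size s = n -> uniq s -> (forall i j : 'I_n, e (nth x0 s i) (nth x0 s j) = h i j) ->
  induced_sub e h.
Proof.
move=> Hs Hu H; exists (fun i => nth x0 s i); split => // i j /eqP.
rewrite nth_uniq ?Hs // => /eqP; exact: val_inj.
Qed.

Ltac solve_e Hsym Hirr :=
  match goal with
  | |- ?E ?u ?u = _ => by rewrite Hirr
  | H : is_true (?E ?u ?v) |- ?E ?u ?v = _ => by rewrite H
  | H : is_true (?E ?v ?u) |- ?E ?u ?v = _ => by rewrite Hsym H
  | H : is_true (~~ ?E ?u ?v) |- ?E ?u ?v = _ => by rewrite (negbTE H)
  | H : is_true (~~ ?E ?v ?u) |- ?E ?u ?v = _ => by rewrite Hsym (negbTE H)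
  end.

Lemma neq_of_adj (T : finType) (e : rel T) a b : irreflexive e -> e a b -> a != b.
Proof. by move=> Hirr H; apply/eqP => E; move: H; rewrite E Hirr. Qed.

Lemma claw_lem (T : finType) (e : rel T) a b c d : symmetric e -> irreflexive e ->
  e a b -> e a c -> e a d -> b != c -> b != d -> c != d ->
  ~~ e b c -> ~~ e b d -> ~~ e c d -> induced_sub e claw.
Proof.
move=> Hsym Hirr Hab Hac Had Dbc Dbd Dcd Nbc Nbd Ncd.
apply: (@ind_list _ _ _ _ a [:: a; b; c; d]) => //.
  rewrite /= !inE !negb_or Dbc Dbd Dcd (neq_of_adj Hirr Hab) (neq_of_adj Hirr Hac) (neq_of_adj Hirr Had).
  done.
elim/ord4_ind; elim/ord4_ind; rewrite /claw /mkgraph /=; solve_e Hsym Hirr.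
Qed.

Lemma k1_lem (T : finType) (e : rel T) a b c d : symmetric e -> irreflexive e ->
  a != b -> a != c -> a != d -> b != c -> b != d -> c != d ->
  ~~ e a b -> ~~ e a c -> ~~ e a d ->
  ~~ e b c -> ~~ e b d -> ~~ e c d -> induced_sub e fourK1.
Proof.
move=> Hsym Hirr Dab Dac Dad Dbc Dbd Dcd Nab Nac Nad Nbc Nbd Ncd.
apply: (@ind_list _ _ _ _ a [:: a; b; c; d]) => //.
  by rewrite /= !inE !negb_or Dab Dac Dad Dbc Dbd Dcd.
elim/ord4_ind; elim/ord4_ind; rewrite /fourK1 /mkgraph /=; solve_e Hsym Hirr.
Qed.

Lemma k5e_lem (T : finType) (e : rel T) a b c d f : symmetric e -> irreflexive e ->
  a != b -> ~~ e a b -> e a c -> e a d -> e a f -> e b c -> e b d -> e b f ->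
  e c d -> e c f -> e d f -> induced_sub e K5e.
Proof.
move=> Hsym Hirr Dab Nab Hac Had Haf Hbc Hbd Hbf Hcd Hcf Hdf.
apply: (@ind_list _ _ _ _ a [:: a; b; c; d; f]) => //.
  by rewrite /= !inE !negb_or Dab !(neq_of_adj Hirr Hac, neq_of_adj Hirr Had, neq_of_adj Hirr Haf,
     neq_of_adj Hirr Hbc, neq_of_adj Hirr Hbd, neq_of_adj Hirr Hbf, neq_of_adj Hirr Hcd,
     neq_of_adj Hirr Hcf, neq_of_adj Hirr Hdf).
elim/ord5_ind; elim/ord5_ind; rewrite /K5e /mkgraph /=; solve_e Hsym Hirr.
Qed.

Theorem claim16 (T : finType) (e : rel T) (c : 'I_5 -> T) :
  simple_graph e -> in_classC e -> connected_graph e -> induced_C5 e c ->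
  Xset e c != set0 ->
  #|Rset e c| <= 2 \/ clique_cutset e (Xset e c).
Proof.
move=> [Hsym Hirr] [Ncl [N4 [_ [_ [_ Nk]]]]] _ [cinj Hc] HX.
have outN v i : v \notin codom c -> v != c i.
  by move=> Ho; apply/eqP => E; rewrite E codom_f in Ho.
have inR v : v \in Rset e c -> v \notin codom c /\ forall i, e v (c i) = false.
  rewrite inE => /andP [Ho /eqP H]; split => // i; apply/negbTE/negP => Hi.
  have : i \in nbC e c v by rewrite inE.
  by rewrite H inE.
have inR_intro v : v \notin codom c -> (forall i, e v (c i) = false) -> v \in Rset e c.
  move=> Ho H; rewrite inE; apply/andP; split => //; apply/eqP/setP => i; by rewrite !inE H.
have inX v : v \in Xset e c -> v \notin codom c /\
    exists j, forall i, e v (c i) = (i == j) || (i == s5 j).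
  case/bigcupP => j _; rewrite inE => /andP [Ho /eqP H]; split => //; exists j => i.
  have -> : e v (c i) = (i \in nbC e c v) by rewrite inE.
  by rewrite H !inE.
have inX_intro v j : v \notin codom c -> (forall i, e v (c i) = (i == j) || (i == s5 j)) ->
    v \in Xset e c.
  move=> Ho H; apply/bigcupP; exists j => //; rewrite inE; apply/andP; split => //.
  by apply/eqP/setP => i; rewrite !inE H.
have ecc i j : e (c i) (c j) = mkgraph cyc5 i j by apply: Hc.
have cneq i j : i != j -> c i != c j.
  by move=> H; apply/eqP => /cinj E; rewrite E eqxx in H.
have RnX r : r \in Rset e c -> r \notin Xset e c.
  move=> /inR [_ H]; apply/negP => /inX [_ [j Hj]].
  by move: (Hj j); rewrite H eqxx.
case: (leqP #|Rset e c| 2) => HR; [by left | right].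
have [r1 Hr1] : exists r1, r1 \in Rset e c.
  by apply/set0Pn; rewrite -card_gt0; apply: leq_trans HR.
have HR1 := cardsD1 r1 (Rset e c); rewrite Hr1 in HR1.
have [r2 Hr2] : exists r2, r2 \in Rset e c :\ r1.
  by apply/set0Pn; rewrite -card_gt0; move: HR; rewrite HR1 add1n ltnS; apply: leq_trans.
have HR2 := cardsD1 r2 (Rset e c :\ r1); rewrite Hr2 in HR2.
have [r3 Hr3] : exists r3, r3 \in Rset e c :\ r1 :\ r2.
  apply/set0Pn; rewrite -card_gt0; move: HR; rewrite HR1 HR2 !add1n !ltnS.
  by apply: leq_trans.
move: Hr2 Hr3; rewrite !in_setD1 => /andP [D21 Hr2] /andP [D32 /andP [D31 Hr3]].
have Rclq r r' : r \in Rset e c -> r' \in Rset e c -> r != r' -> e r r'.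
  move=> /inR [Ho H] /inR [Ho' H'] D; case E: (e r r') => //; exfalso; apply: N4.
  apply: (@k1_lem _ _ r r' (c o0) (c o2)) => //; try by rewrite ?H ?H' ?E.
  - exact: outN. - exact: outN. - exact: outN. - exact: outN.
  - exact: cneq.
  - by rewrite ecc.
have XR x r : x \in Xset e c -> r \in Rset e c -> e x r.
  move=> /inX [Ho [j Hj]] /inR [Ho' H']; case E: (e x r) => //; exfalso; apply: N4.
  have [a [b /and5P [Da1 Da2 Db1 Db2 /andP [Dab Nab]]]] := FA j.
  apply: (@k1_lem _ _ r x (c a) (c b)) => //.
  - by apply/eqP => Er; move: (Hj j); rewrite -Er H' eqxx.
  - exact: outN. - exact: outN. - exact: outN. - exact: outN.
  - exact: cneq.
  - by rewrite Hsym E.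
  - by rewrite H'. - by rewrite H'.
  - by rewrite Hj negb_or Da1 Da2.
  - by rewrite Hj negb_or Db1 Db2.
  - by rewrite ecc.
have Xclq : clique e (Xset e c).
  move=> x x' Hx Hx' D; case E: (e x x') => //; exfalso; apply: Nk.
  apply: (@k5e_lem _ _ x x' r1 r2 r3) => //; try (by rewrite E); try exact: XR;
    by apply: Rclq; rewrite // eq_sym.
have clos u w : u \in Rset e c -> e u w -> w \notin Xset e c -> w \in Rset e c.
  move=> Hu Huw HwX; have [Hou Hu'] := inR _ Hu.
  have Ho : w \notin codom c.
    by apply/negP => /codomP [i Ei]; move: Huw; rewrite Ei Hu'.
  have Hp : forall a b : 'I_5, ~~ mkgraph cyc5 a b -> a != b -> ~~ (e w (c a) && e w (c b)).
    move=> a b Nab Dab; apply/negP => /andP [Ha Hb]; apply: Ncl.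
    apply: (@claw_lem _ _ w u (c a) (c b)) => //.
    - by rewrite Hsym.
    - exact: outN. - exact: outN. - exact: cneq.
    - by rewrite Hu'. - by rewrite Hu'. - by rewrite ecc.
  case: (boolP [exists i, e w (c i)]) => [/existsP Hex | Hno]; last first.
    apply: inR_intro => // i; apply/negbTE; apply/negP => Hi.
    by move/existsP: Hno; apply; exists i.
  case: (comb Hp Hex) => [[j Hj] | [i Hi]].
    by rewrite (inX_intro w j Ho Hj) in HwX.
  exfalso; have [a [b /and4P [Dab Hia Hib Nab]]] := FC i.
  apply: Ncl; apply: (@claw_lem _ _ (c i) w (c a) (c b)) => //.
  - by rewrite Hsym Hi eqxx.
  - by rewrite ecc. - by rewrite ecc.
  - exact: outN. - exact: outN. - exact: cneq.
  - rewrite Hi; apply/negP => /eqP Eai; move: Hia; rewrite Eai.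
    by rewrite /mkgraph eqxx.
  - rewrite Hi; apply/negP => /eqP Ebi; move: Hib; rewrite Ebi.
    by rewrite /mkgraph eqxx.
  - by rewrite ecc.
split => //; exists r1, (c o0); split.
- exact: RnX.
- by apply/negP => /inX [Ho _]; rewrite codom_f in Ho.
- apply/negP => /connectP [p Hp Hlast].
  have : last r1 p \in Rset e c.
    clear -clos Hp Hr1; elim: p r1 Hr1 Hp => [|v p IH] x Hx //= /andP [/andP [/andP [Hxv _] HvX] Hp].
    apply: IH Hp; exact: (clos x v Hx Hxv HvX).
  rewrite -Hlast => /inR [Ho _]; by rewrite codom_f in Ho.
Qed.
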